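(* Let $\alpha,\beta\in\mathbb{R}$ with $\beta-\alpha-2\neq 0$, and set $\mathbf C_{\alpha,\beta}=\frac{(\beta-3)(2\alpha-\beta+1)}{4}$. For every $f\in C_0^\infty((0,\infty))$ (complex-valued), with $f^\#(r)=f''(r)+\frac{\beta-2}{r}f'(r)+\frac{(\beta-3)^2}{4r^2}f(r)$, there holds \[ \mathbf C_{\alpha,\beta}^2\left\|\frac{f}{r^2}\right\|_{L^2_\beta}^2=\left\|\mathfrak L_\alpha f\right\|_{L^2_\beta}^2-\left(1+\frac{2\mathbf C_{\alpha,\beta}}{(\beta-\alpha-2)^2}\right)\left\|\mathfrak L_\alpha f+\mathbf C_{\alpha,\beta}\frac{f}{r^2}\right\|_{L^2_\beta}^2+\frac{2\mathbf C_{\alpha,\beta}}{(\beta-\alpha-2)^2}\left\|f^\#\right\|_{L^2_\beta}^2 . \]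
   Context: For $\beta\in\mathbb{R}$, $L^2_\beta$ denotes the weighted space on $(0,\infty)$ with norm $\|g\|_{L^2_\beta}^2=\int_0^\infty |g(r)|^2 r^\beta\,dr$. For $\alpha\in\mathbb{R}$, $\mathfrak L_\alpha$ is the operator $\mathfrak L_\alpha f(r)=f''(r)+\frac{\alpha}{r}f'(r)$. Expressions such as $f/r^2$ denote the function $r\mapsto f(r)/r^2$. *)

(* Defs.v *)
From Stdlib Require Import Reals.
From Coquelicot Require Import Coquelicot.
Open Scope R_scope.

(* A complex-valued function f : (0,oo) -> C is represented by its real and
   imaginary parts (u, v), f = u + i v. *)

Definition smooth_pos (u : R -> R) : Prop :=
  forall (n : nat) (r : R), 0 < r -> ex_derive (Derive_n u n) r.

Definition compact_support_pos (u : R -> R) : Prop :=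
  exists a b : R, 0 < a /\ a < b /\
    forall r : R, 0 < r -> (r < a \/ b < r) -> u r = 0.

Definition Cc_inf_pos (u v : R -> R) : Prop :=
  smooth_pos u /\ compact_support_pos u /\ smooth_pos v /\ compact_support_pos v.

Definition L2sq (beta : R) (g1 g2 : R -> R) : R :=
  RInt_gen (fun r => (g1 r ^ 2 + g2 r ^ 2) * Rpower r beta)
           (at_right 0) (Rbar_locally p_infty).

Definition Lop (alpha : R) (u : R -> R) : R -> R :=
  fun r => Derive_n u 2 r + alpha / r * Derive u r.

Definition sharp (beta : R) (u : R -> R) : R -> R :=
  fun r => Derive_n u 2 r + (beta - 2) / r * Derive u r
           + (beta - 3) ^ 2 / (4 * r ^ 2) * u r.

Definition Cab (alpha beta : R) : R := (beta - 3) * (2 * alpha - beta + 1) / 4.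

(* Main.v *)
Require Import Defs.
From Stdlib Require Import Reals Lra.
From Coquelicot Require Import Coquelicot.
Open Scope R_scope.
From Stdlib Require Import Lra.
Lemma zero_int (h : R -> R) x y : (forall r, Rmin x y < r < Rmax x y -> h r = 0) -> is_RInt h x y 0.
Proof.
  intros H. apply is_RInt_ext with (fun _ => 0).
  - intros r Hr. symmetry. apply H. exact Hr.
  - pose proof (@is_RInt_const R_CompleteNormedModule x y 0) as Hc.
    unfold scal in Hc; simpl in Hc; unfold mult in Hc; simpl in Hc; rewrite Rmult_0_r in Hc.
    exact Hc.
Qed.

Lemma gen_eq (a b : R) (h : R -> R) : 0 < a -> a < b ->
  (forall r, 0 < r -> (r <= a \/ b <= r) -> h r = 0) -> ex_RInt h a b ->
  RInt_gen h (at_right 0) (Rbar_locally p_infty) = RInt h a b.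
Proof.
  intros Ha Hab Hz Hex.
  apply (is_RInt_gen_unique (V:=R_CompleteNormedModule)).
  intros P [eps HP].
  exists (fun x => 0 < x < a) (fun y => b < y).
  - exists (mkposreal a Ha). intros y Hy Hpos. simpl in Hy.
    unfold ball in Hy; simpl in Hy; unfold AbsRing_ball, abs, minus, plus, opp in Hy; simpl in Hy.
    split; [exact Hpos|]. apply Rabs_lt_between in Hy. lra.
  - exists b. intros; lra.
  - intros x y Hx Hy. exists (RInt h a b). split.
    + simpl.
      replace (RInt h a b) with (plus 0 (plus (RInt h a b) 0)).
      2: { unfold plus; simpl; ring. }
      apply (@is_RInt_Chasles R_CompleteNormedModule h x a y).
      * apply zero_int. intros r Hr. rewrite Rmin_left in Hr by lra. rewrite Rmax_right in Hr by lra.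
        apply Hz; lra.
      * apply (@is_RInt_Chasles R_CompleteNormedModule h a b y).
        -- apply RInt_correct. exact Hex.
        -- apply zero_int. intros r Hr. rewrite Rmin_left in Hr by lra. rewrite Rmax_right in Hr by lra.
           apply Hz; lra.
    + apply HP. apply ball_center.
Qed.

Lemma loc_of (r eps : R) (P : R -> Prop) : 0 < eps -> (forall y, Rabs (y - r) < eps -> P y) -> locally r P.
Proof.
  intros He H. exists (mkposreal eps He). intros y Hy. apply H. exact Hy.
Qed.

Lemma deriv_zero (u : R -> R) a b : (forall r, 0 < r -> (r < a \/ b < r) -> u r = 0) ->
  forall n r, 0 < r -> (r < a \/ b < r) -> Derive_n u n r = 0.
Proof.
  intros Hz n. induction n as [|n IH]; intros r Hr Hor.
  - simpl. apply Hz; assumption.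
  - simpl. rewrite (Derive_ext_loc _ (fun _ => 0)).
    + apply Derive_const.
    + destruct Hor as [Hl | Hl].
      * apply (loc_of r (Rmin r (a - r))).
        { apply Rmin_glb_lt; lra. }
        intros y Hy. apply Rabs_lt_between in Hy.
        assert (Rmin r (a - r) <= r) by apply Rmin_l.
        assert (Rmin r (a - r) <= a - r) by apply Rmin_r.
        apply IH; [lra | left; lra].
      * apply (loc_of r (Rmin r (r - b))).
        { apply Rmin_glb_lt; lra. }
        intros y Hy. apply Rabs_lt_between in Hy.
        assert (Rmin r (r - b) <= r) by apply Rmin_l.
        assert (Rmin r (r - b) <= r - b) by apply Rmin_r.
        apply IH; [lra | right; lra].
Qed.

Lemma exR (a b : R) (h : R -> R) : 0 < a -> a < b -> (forall z, 0 < z -> ex_derive h z) -> ex_RInt h a b.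
Proof.
  intros Ha Hab Hd.
  apply (@ex_RInt_continuous R_CompleteNormedModule). intros z Hz'.
  rewrite Rmin_left in Hz' by lra. rewrite Rmax_right in Hz' by lra.
  exact (ex_derive_continuous h z (Hd z ltac:(lra))).
Qed.

Lemma RI_lin (f1 f2 f3 f4 : R -> R) c1 c3 c4 a b :
  ex_RInt f1 a b -> ex_RInt f2 a b -> ex_RInt f3 a b -> ex_RInt f4 a b ->
  RInt (fun x => c1 * f1 x - f2 x + c3 * f3 x - c4 * f4 x) a b
  = c1 * RInt f1 a b - RInt f2 a b + c3 * RInt f3 a b - c4 * RInt f4 a b.
Proof.
  intros H1 H2 H3 H4.
  apply (@is_RInt_unique R_CompleteNormedModule).
  pose proof (RInt_correct f1 a b H1) as I1.
  pose proof (RInt_correct f2 a b H2) as I2.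
  pose proof (RInt_correct f3 a b H3) as I3.
  pose proof (RInt_correct f4 a b H4) as I4.
  exact (is_RInt_minus _ _ _ _ _ _ (is_RInt_plus _ _ _ _ _ _
           (is_RInt_minus _ _ _ _ _ _ (is_RInt_scal _ _ _ c1 _ I1) I2)
           (is_RInt_scal _ _ _ c3 _ I3)) (is_RInt_scal _ _ _ c4 _ I4)).
Qed.

Lemma ftc (F G : R -> R) a b : a < b ->
  (forall x, a <= x <= b -> is_derive F x (G x)) ->
  (forall x, a <= x <= b -> ex_derive G x) ->
  RInt G a b = F b - F a.
Proof.
  intros Hab HF HG.
  apply (@is_RInt_unique R_CompleteNormedModule).
  apply (@is_RInt_derive R_CompleteNormedModule).
  - intros x Hx. rewrite Rmin_left in Hx by lra. rewrite Rmax_right in Hx by lra. apply HF; exact Hx.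
  - intros x Hx. rewrite Rmin_left in Hx by lra. rewrite Rmax_right in Hx by lra.
    exact (ex_derive_continuous G x (HG x Hx)).
Qed.

Lemma gen_eq' (a b : R) (h : R -> R) : 0 < a -> a < b ->
  (forall r, 0 < r -> (r <= a \/ b <= r) -> h r = 0) -> (forall z, 0 < z -> ex_derive h z) ->
  RInt_gen h (at_right 0) (Rbar_locally p_infty) = RInt h a b.
Proof.
  intros Ha Hab Hz Hd. apply gen_eq; try assumption.
  apply (@ex_RInt_continuous R_CompleteNormedModule). intros z Hz'.
  rewrite Rmin_left in Hz' by lra. rewrite Rmax_right in Hz' by lra.
  exact (ex_derive_continuous h z (Hd z ltac:(lra))).
Qed.

Ltac side Hs Hs' z Hz :=
  repeat match goal with
  | |- _ /\ _ => split
  | |- True => exact I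
  | |- ex_derive _ _ => first [exact (Hs 0%nat z Hz) | exact (Hs 1%nat z Hz) | exact (Hs 2%nat z Hz)
                             | exact (Hs' 0%nat z Hz) | exact (Hs' 1%nat z Hz) | exact (Hs' 2%nat z Hz)]
  | |- _ <> 0 => apply Rgt_not_eq; repeat apply Rmult_lt_0_compat; lra
  | |- 0 < _ => exact Hz
  end.

Theorem theorem1p2 (alpha beta : R) (hab : beta - alpha - 2 <> 0)
  (u v : R -> R) (hf : Cc_inf_pos u v) :
  let C := Cab alpha beta in
  let K := 2 * C / (beta - alpha - 2) ^ 2 in
  C ^ 2 * L2sq beta (fun r => u r / r ^ 2) (fun r => v r / r ^ 2)
  = L2sq beta (Lop alpha u) (Lop alpha v)
    - (1 + K) * L2sq beta (fun r => Lop alpha u r + C * (u r / r ^ 2))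
                          (fun r => Lop alpha v r + C * (v r / r ^ 2))
    + K * L2sq beta (sharp beta u) (sharp beta v).
Proof.
  intros C K.
  destruct hf as [Hsu [[au [bu [Hau [Habu Hzu]]]] [Hsv [av [bv [Hav [Habv Hzv]]]]]]].
  set (a := Rmin au av / 2). set (b := Rmax bu bv + 1).
  assert (Hm : 0 < Rmin au av) by (apply Rmin_glb_lt; lra).
  assert (Hm1 := Rmin_l au av). assert (Hm2 := Rmin_r au av).
  assert (HM1 := Rmax_l bu bv). assert (HM2 := Rmax_r bu bv).
  assert (Ha : 0 < a) by (unfold a; lra).
  assert (Hab : a < b) by (unfold a, b; lra).
  assert (ZU : forall n r, 0 < r -> (r <= a \/ b <= r) -> Derive_n u n r = 0).
  { intros n r Hr Hor. apply (deriv_zero u au bu Hzu n r Hr). unfold a, b in Hor; destruct Hor; [left|right]; lra. }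
  assert (ZV : forall n r, 0 < r -> (r <= a \/ b <= r) -> Derive_n v n r = 0).
  { intros n r Hr Hor. apply (deriv_zero v av bv Hzv n r Hr). unfold a, b in Hor; destruct Hor; [left|right]; lra. }
  unfold L2sq, Lop, sharp. cbv beta.
  do 4 (rewrite (gen_eq' a b _ Ha Hab);
    [ | intros r Hr Hor;
        pose proof (ZU 0%nat r Hr Hor) as U0; pose proof (ZU 1%nat r Hr Hor) as U1;
        pose proof (ZU 2%nat r Hr Hor) as U2;
        pose proof (ZV 0%nat r Hr Hor) as V0; pose proof (ZV 1%nat r Hr Hor) as V1;
        pose proof (ZV 2%nat r Hr Hor) as V2; change (u r = 0) in U0; change (Derive u r = 0) in U1; change (v r = 0) in V0; change (Derive v r = 0) in V1;
        rewrite ?U0, ?U1, ?U2, ?V0, ?V1, ?V2; unfold Rdiv; ring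
      | intros z Hz; unfold Rpower; auto_derive; side Hsu Hsv z Hz ]).
  set (h1 := fun r : R => ((u r / r ^ 2) ^ 2 + (v r / r ^ 2) ^ 2) * Rpower r beta).
  set (h2 := fun r : R => ((Derive_n u 2 r + alpha / r * Derive u r) ^ 2 +
      (Derive_n v 2 r + alpha / r * Derive v r) ^ 2) * Rpower r beta).
  set (h3 := fun r : R =>
     ((Derive_n u 2 r + alpha / r * Derive u r + C * (u r / r ^ 2)) ^ 2 +
      (Derive_n v 2 r + alpha / r * Derive v r + C * (v r / r ^ 2)) ^ 2) * Rpower r beta).
  set (h4 := fun r : R =>
     ((Derive_n u 2 r + (beta - 2) / r * Derive u r + (beta - 3) ^ 2 / (4 * r ^ 2) * u r) ^ 2 +
      (Derive_n v 2 r + (beta - 2) / r * Derive v r + (beta - 3) ^ 2 / (4 * r ^ 2) * v r) ^ 2) *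
     Rpower r beta).
  assert (Hd : forall z, 0 < z -> ex_derive h1 z /\ ex_derive h2 z /\ ex_derive h3 z /\ ex_derive h4 z).
  { intros z Hz. unfold h1, h2, h3, h4, Rpower. repeat split; auto_derive; side Hsu Hsv z Hz. }
  assert (Hlin := RI_lin h1 h2 h3 h4 (C ^ 2) (1 + K) K a b
     (exR a b h1 Ha Hab (fun z Hz => proj1 (Hd z Hz)))
     (exR a b h2 Ha Hab (fun z Hz => proj1 (proj2 (Hd z Hz))))
     (exR a b h3 Ha Hab (fun z Hz => proj1 (proj2 (proj2 (Hd z Hz)))))
     (exR a b h4 Ha Hab (fun z Hz => proj2 (proj2 (proj2 (Hd z Hz)))))).
  set (dl := beta - alpha - 2).
  set (A1 := - K * dl).
  set (A2 := 2 * C * (1 + K) - 2 * K * ((beta - 3) ^ 2 / 4)).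
  set (A3 := - C * (1 + K) * dl).
  set (F := fun x => exp (beta * ln x) *
     (A1 * (Derive u x) ^ 2 / x + A2 * Derive u x * u x / x ^ 2 + A3 * (u x) ^ 2 / x ^ 3
      + A1 * (Derive v x) ^ 2 / x + A2 * Derive v x * v x / x ^ 2 + A3 * (v x) ^ 2 / x ^ 3)).
  assert (Hftc : RInt (fun x => C ^ 2 * h1 x - h2 x + (1 + K) * h3 x - K * h4 x) a b = F b - F a).
  { apply ftc; [exact Hab | | ].
    - intros x Hx. assert (Hz : 0 < x) by lra. unfold F, h1, h2, h3, h4, Rpower. auto_derive.
      + side Hsu Hsv x Hz.
      + change (Derive (fun x0 => Derive u x0) x) with (Derive_n u 2 x).
        change (Derive (fun x0 => Derive v x0) x) with (Derive_n v 2 x).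
        change (Derive (fun x0 => u x0) x) with (Derive u x).
        change (Derive (fun x0 => v x0) x) with (Derive v x).
        set (w := exp (beta * ln x)).
        set (u0 := u x). set (u1 := Derive u x). set (u2 := Derive_n u 2 x).
        set (v0 := v x). set (v1 := Derive v x). set (v2 := Derive_n v 2 x).
        assert (Hx0 : x <> 0) by lra.
        unfold A1, A2, A3, K, dl, C, Cab. field. repeat split; assumption.
    - intros x Hx. assert (Hz : 0 < x) by lra. unfold h1, h2, h3, h4, Rpower. auto_derive. side Hsu Hsv x Hz. }
  assert (Fa : F a = 0).
  { assert (E0 : u a = 0) by exact (ZU 0%nat a Ha (or_introl (Rle_refl a))).
    assert (E1 : Derive u a = 0) by exact (ZU 1%nat a Ha (or_introl (Rle_refl a))).
    assert (E2 : v a = 0) by exact (ZV 0%nat a Ha (or_introl (Rle_refl a))).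
    assert (E3 : Derive v a = 0) by exact (ZV 1%nat a Ha (or_introl (Rle_refl a))).
    unfold F. rewrite E0, E1, E2, E3. unfold Rdiv. ring. }
  assert (Fb : F b = 0).
  { assert (Hb : 0 < b) by lra.
    assert (E0 : u b = 0) by exact (ZU 0%nat b Hb (or_intror (Rle_refl b))).
    assert (E1 : Derive u b = 0) by exact (ZU 1%nat b Hb (or_intror (Rle_refl b))).
    assert (E2 : v b = 0) by exact (ZV 0%nat b Hb (or_intror (Rle_refl b))).
    assert (E3 : Derive v b = 0) by exact (ZV 1%nat b Hb (or_intror (Rle_refl b))).
    unfold F. rewrite E0, E1, E2, E3. unfold Rdiv. ring. }
  rewrite Fa, Fb in Hftc. lra.
Qed.
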